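(* For any simple undirected graph $G$ with $n$ vertices and $m$ edges, $$n_G(\mathcal{L}_4)=m-n\langle k^2\rangle+\mu_1-\mu_2,\qquad \mu_1=\frac12\sum_{st\in E}(\xi(s)+\xi(t)),\quad \mu_2=\sum_{st\in E}|c(s,t)|.$$
   Context: $k_x$ degree of $x$, $\langle k^2\rangle=\frac1n\sum_xk_x^2$, $\Gamma(x)$ neighbourhood, $\xi(s)=\sum_{t\in\Gamma(s)}k_t$, $c(s,t)=\Gamma(s)\cap\Gamma(t)$. $\mathcal{L}_4$ is the path on 4 vertices; $n_G(F)$ counts (not necessarily induced) subgraphs isomorphic to $F$. *)

(* Defs.v *)
From mathcomp Require Import all_boot all_order all_algebra.
Set Implicit Arguments. Unset Strict Implicit. Unset Printing Implicit Defensive.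
Import Order.TTheory GRing.Theory Num.Theory.
Local Open Scope ring_scope.

Definition simple_graph (n : nat) (e : rel 'I_n) : Prop :=
  symmetric e /\ irreflexive e.

Definition edges (n : nat) (e : rel 'I_n) : {set 'I_n * 'I_n} :=
  [set p : 'I_n * 'I_n | (p.1 < p.2)%N && e p.1 p.2].

Definition nedges (n : nat) (e : rel 'I_n) : nat := #|edges e|.

Definition nbhd (n : nat) (e : rel 'I_n) (x : 'I_n) : {set 'I_n} := [set y | e x y].
Definition deg (n : nat) (e : rel 'I_n) (x : 'I_n) : nat := #|nbhd e x|.

Definition avg_k2 (n : nat) (e : rel 'I_n) : rat :=
  (n%:R)^-1 * \sum_(x : 'I_n) ((deg e x)%:R) ^+ 2.

Definition xi (n : nat) (e : rel 'I_n) (s : 'I_n) : nat :=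
  (\sum_(t in nbhd e s) deg e t)%N.

Definition common (n : nat) (e : rel 'I_n) (s t : 'I_n) : {set 'I_n} :=
  nbhd e s :&: nbhd e t.

Definition mu1 (n : nat) (e : rel 'I_n) : rat :=
  2^-1 * \sum_(p in edges e) ((xi e p.1)%:R + (xi e p.2)%:R).

Definition mu2 (n : nat) (e : rel 'I_n) : rat :=
  \sum_(p in edges e) (#|common e p.1 p.2|)%:R.

(* Copies of the path L_4 in G: a (not necessarily induced) subgraph
   isomorphic to L_4 is determined by its edge set (L_4 has no isolated
   vertices); it is the image of an injective map f : 'I_4 -> 'I_n with
   f 0 ~ f 1 ~ f 2 ~ f 3, the edges being 2-element vertex sets. *)
Definition is_L4_embedding (n : nat) (e : rel 'I_n) (f : {ffun 'I_4 -> 'I_n}) : bool :=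
  injectiveb f && [forall i : 'I_3, e (f (widen_ord (leqnSn 3) i)) (f (lift ord0 i))].

Definition L4_edgeset (n : nat) (f : {ffun 'I_4 -> 'I_n}) : {set {set 'I_n}} :=
  [set [set f (widen_ord (leqnSn 3) i); f (lift ord0 i)] | i : 'I_3].

Definition L4_copies (n : nat) (e : rel 'I_n) : {set {set {set 'I_n}}} :=
  [set L4_edgeset f | f in [pred f | is_L4_embedding e f]].

Definition nL4 (n : nat) (e : rel 'I_n) : nat := #|L4_copies e|.

(* Main.v *)
Require Import Defs.
From mathcomp Require Import all_boot all_order all_algebra zify ring lra.
Set Implicit Arguments. Unset Strict Implicit. Unset Printing Implicit Defensive.
Import Order.TTheory GRing.Theory Num.Theory.

Section S.
Variable n : nat.
Implicit Type f g : {ffun 'I_4 -> 'I_n}.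

Definition V f (k : nat) := f (inord k).

Lemma Vw f (i : 'I_3) : f (widen_ord (leqnSn 3) i) = V f i.
Proof. rewrite /V; apply: f_equal; apply/val_inj; rewrite /= inordK //; have := ltn_ord i; lia. Qed.
Lemma Vl f (i : 'I_3) : f (lift ord0 i) = V f i.+1.
Proof. rewrite /V; apply: f_equal; apply/val_inj; rewrite /= /bump /= inordK //; have := ltn_ord i; lia. Qed.

Lemma L4_edgesetE f : L4_edgeset f =
  [set [set V f 0; V f 1]; [set V f 1; V f 2]; [set V f 2; V f 3]].
Proof.
apply/setP=> X; rewrite !inE; apply/imsetP/idP.
- by case=> -i _ ->; rewrite Vw Vl; case: i => -[|[|[|i]]] Hi //=; rewrite eqxx ?orbT.
- case/orP=> [/orP[]|] /eqP ->.
  + by exists (Ordinal (isT : 0 < 3)) => //; rewrite Vw Vl.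
  + by exists (Ordinal (isT : 1 < 3)) => //; rewrite Vw Vl.
  + by exists (Ordinal (isT : 2 < 3)) => //; rewrite Vw Vl.
Qed.

Lemma embE (e : rel 'I_n) f : is_L4_embedding e f =
  injectiveb f && [&& e (V f 0) (V f 1), e (V f 1) (V f 2) & e (V f 2) (V f 3)].
Proof.
rewrite /is_L4_embedding; congr (_ && _).
apply/forallP/and3P.
- move=> H; split.
  + by have := H (Ordinal (isT : 0 < 3)); rewrite Vw Vl.
  + by have := H (Ordinal (isT : 1 < 3)); rewrite Vw Vl.
  + by have := H (Ordinal (isT : 2 < 3)); rewrite Vw Vl.
- by case=> H0 H1 H2 i; rewrite Vw Vl; case: i => -[|[|[|i]]] Hi.
Qed.

Lemma Vinj f : injective f -> forall i j, i < 4 -> j < 4 -> V f i = V f j -> i = j.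
Proof.
move=> fi i j Hi Hj /fi /(congr1 val); rewrite /= !inordK //.
Qed.

Lemma ffun4P f g : (forall k, k < 4 -> V f k = V g k) -> f = g.
Proof.
move=> H; apply/ffunP=> i; rewrite -(inord_val i); exact: H.
Qed.


Definition frev f : {ffun 'I_4 -> 'I_n} := [ffun i => f (rev_ord i)].

Lemma revV f k : k < 4 -> V (frev f) k = V f (3 - k).
Proof.
move=> Hk; rewrite /V /frev ffunE; apply: f_equal; apply/val_inj.
rewrite /= !inordK //; lia.
Qed.

Lemma set2C (T : finType) (a b : T) : [set a; b] = [set b; a].
Proof. by rewrite setUC. Qed.

Lemma L4_rev f : L4_edgeset (frev f) = L4_edgeset f.
Proof.
rewrite !L4_edgesetE !revV // (_ : 3 - 0 = 3) // (_ : 3 - 1 = 2) // (_ : 3 - 2 = 1) // (_ : 3 - 3 = 0) //.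
rewrite (set2C (V f 1)) (set2C (V f 2)) (set2C (V f 3)).
apply/setP=> X; rewrite !inE.
by case: (X == _); case: (X == _); case: (X == _).
Qed.

Lemma in2 f a i j : injective f -> a < 4 -> i < 4 -> j < 4 ->
  V f a \in [set V f i; V f j] -> a = i \/ a = j.
Proof.
move=> fi Ha Hi Hj; rewrite !inE => /orP[] /eqP /Vinj H; [left|right]; exact: H.
Qed.

Lemma memL f (x : 'I_n) (X : {set 'I_n}) : x \in X -> X \in L4_edgeset f -> exists k, k < 4 /\ x = V f k.
Proof.
move=> xX; rewrite L4_edgesetE !inE => /orP[/orP[]|] /eqP E; move: xX; rewrite E !inE
  => /orP[] /eqP ->; by [exists 0|exists 1|exists 2|exists 3].
Qed.

Lemma edgeL f a b : injective f -> a < 4 -> b < 4 -> a <> b ->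
  [set V f a; V f b] \in L4_edgeset f -> a = b.+1 \/ b = a.+1.
Proof.
move=> fi Ha Hb Hab; rewrite L4_edgesetE !inE => /orP[/orP[]|] /eqP E.
all: have Ea := set21 (V f a) (V f b); rewrite E in Ea.
all: have Eb := set22 (V f a) (V f b); rewrite E in Eb.
all: have := in2 fi Ha _ _ Ea; have := in2 fi Hb _ _ Eb.
all: lia.
Qed.


Lemma path4 (k0 k1 k2 k3 : nat) : k0 < 4 -> k1 < 4 -> k2 < 4 -> k3 < 4 ->
  (k0 == k1.+1) || (k1 == k0.+1) -> (k1 == k2.+1) || (k2 == k1.+1) ->
  (k2 == k3.+1) || (k3 == k2.+1) -> k0 != k2 -> k0 != k3 -> k1 != k3 ->
  [&& k0 == 0, k1 == 1, k2 == 2 & k3 == 3] || [&& k0 == 3, k1 == 2, k2 == 1 & k3 == 0].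
Proof.
case: k0 => [|[|[|[|k0]]]] //; case: k1 => [|[|[|[|k1]]]] //;
case: k2 => [|[|[|[|k2]]]] //; case: k3 => [|[|[|[|k3]]]] //.
Qed.

Lemma fiber f g : injective f -> injective g -> L4_edgeset g = L4_edgeset f ->
  g = f \/ g = frev f.
Proof.
move=> fi gi E.
have inLg : forall i, i < 3 -> [set V g i; V g i.+1] \in L4_edgeset f.
  move=> i Hi; rewrite -E L4_edgesetE !inE.
  by case: i Hi => [|[|[|i]]] //= _; rewrite eqxx ?orbT.
have [k0 [H0 E0]] := memL (set21 _ _) (inLg 0 isT).
have [k1 [H1 E1]] := memL (set21 _ _) (inLg 1 isT).
have [k2 [H2 E2]] := memL (set21 _ _) (inLg 2 isT).
have [k3 [H3 E3]] := memL (set22 _ _) (inLg 2 isT).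
have gne : forall i j, i < 4 -> j < 4 -> i <> j -> V g i <> V g j.
  by move=> i j Hi Hj Hij /(Vinj gi Hi Hj).
have fne : forall i j, i < 4 -> j < 4 -> V f i = V f j -> i = j.
  by move=> i j Hi Hj /(Vinj fi Hi Hj).
have d01 : k0 <> k1 by move=> h; apply: (gne 0 1) => //; rewrite E0 E1 h.
have d02 : k0 <> k2 by move=> h; apply: (gne 0 2) => //; rewrite E0 E2 h.
have d03 : k0 <> k3 by move=> h; apply: (gne 0 3) => //; rewrite E0 E3 h.
have d12 : k1 <> k2 by move=> h; apply: (gne 1 2) => //; rewrite E1 E2 h.
have d13 : k1 <> k3 by move=> h; apply: (gne 1 3) => //; rewrite E1 E3 h.
have d23 : k2 <> k3 by move=> h; apply: (gne 2 3) => //; rewrite E2 E3 h.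
have e01 := edgeL fi H0 H1 d01; rewrite -E0 -E1 in e01; have {}e01 := e01 (inLg 0 isT).
have e12 := edgeL fi H1 H2 d12; rewrite -E1 -E2 in e12; have {}e12 := e12 (inLg 1 isT).
have e23 := edgeL fi H2 H3 d23; rewrite -E2 -E3 in e23; have {}e23 := e23 (inLg 2 isT).
have b01 : (k0 == k1.+1) || (k1 == k0.+1) by case: e01 => ->; rewrite eqxx ?orbT.
have b12 : (k1 == k2.+1) || (k2 == k1.+1) by case: e12 => ->; rewrite eqxx ?orbT.
have b23 : (k2 == k3.+1) || (k3 == k2.+1) by case: e23 => ->; rewrite eqxx ?orbT.
have b02 : k0 != k2 by apply/eqP.
have b03 : k0 != k3 by apply/eqP.
have b13 : k1 != k3 by apply/eqP.
have : [&& k0 == 0, k1 == 1, k2 == 2 & k3 == 3] || [&& k0 == 3, k1 == 2, k2 == 1 & k3 == 0].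
  exact: path4 H0 H1 H2 H3 b01 b12 b23 b02 b03 b13.
case/orP=> /and4P[/eqP h0 /eqP h1 /eqP h2 /eqP h3]; [left|right]; apply: ffun4P => k Hk.
- by case: k Hk => [|[|[|[|k]]]] //= _; rewrite ?E0 ?E1 ?E2 ?E3 ?h0 ?h1 ?h2 ?h3.
- by case: k Hk => [|[|[|[|k]]]] //= _; rewrite revV // ?E0 ?E1 ?E2 ?E3 ?h0 ?h1 ?h2 ?h3.
Qed.


Variable e : rel 'I_n.
Hypothesis esym : symmetric e.
Hypothesis eirr : irreflexive e.

Definition Emb := [set f | is_L4_embedding e f].

Lemma frev_emb f : f \in Emb -> frev f \in Emb.
Proof.
rewrite !inE !embE => /andP[/injectiveP fi /and3P[h1 h2 h3]].
apply/andP; split.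
  apply/injectiveP => x y; rewrite /frev !ffunE => /fi; exact: rev_ord_inj.
rewrite !revV //=.
by rewrite (_ : 3 - 0 = 3) // (_ : 3 - 1 = 2) // (_ : 3 - 2 = 1) // (_ : 3 - 3 = 0) // esym h3 esym h2 esym h1.
Qed.

Lemma frev_neq f : f \in Emb -> f != frev f.
Proof.
rewrite inE embE => /andP[/injectiveP fi _]; apply/eqP => h.
have : V f 0 = V (frev f) 0 by rewrite -h.
by rewrite revV // => /(Vinj fi) => /(_ isT isT).
Qed.

Lemma card_Emb : #|Emb| = (2 * nL4 e)%N.
Proof.
rewrite -sum1_card (partition_big (L4_edgeset (n:=n)) (mem (L4_copies e))).
  rewrite /nL4 -sum1_card big_distrr /=; apply: eq_bigr => S /imsetP [f0 Hf0 ->].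
  have Hf0' : f0 \in Emb by rewrite inE.
  rewrite sum1dep_card muln1.
  suff -> : [set x in Emb | L4_edgeset x == L4_edgeset f0] = [set f0; frev f0].
    by rewrite cards2 frev_neq.
  apply/setP => g; rewrite !inE.
  apply/idP/idP.
    case/andP=> Hg /eqP E; move: Hg Hf0'; rewrite !inE !embE => /andP[/injectiveP gi _] /andP[/injectiveP fi _].
    by case: (fiber fi gi E) => ->; rewrite eqxx ?orbT.
  case/orP=> /eqP ->.
    by apply/andP; split => //; rewrite -[is_L4_embedding _ _]inE.
  apply/andP; split; last by rewrite L4_rev.
  by rewrite -[is_L4_embedding _ _]inE frev_emb.
move=> f Hf; apply/imsetP; exists f => //; by move: Hf; rewrite inE.
Qed.


Definition mk (b c : 'I_n) (p : 'I_n * 'I_n) : {ffun 'I_4 -> 'I_n} :=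
  [ffun i : 'I_4 => nth p.1 [:: p.1; b; c; p.2] i].

Lemma mkV b c p k : k < 4 -> V (mk b c p) k = nth p.1 [:: p.1; b; c; p.2] k.
Proof. by move=> Hk; rewrite /V ffunE inordK. Qed.

Definition Pset (b c : 'I_n) : {set 'I_n * 'I_n} :=
  [set p in setX (nbhd e b :\ c) (nbhd e c :\ b) | p.1 != p.2].

Lemma Pset_card b c : e b c ->
  (#|Pset b c| + #|common e b c| = (deg e b - 1) * (deg e c - 1))%N.
Proof.
move=> ebc.
have dA : #|nbhd e b :\ c| = (deg e b - 1)%N.
  by rewrite /deg (cardsD1 c (nbhd e b)) inE ebc add1n subn1.
have dD : #|nbhd e c :\ b| = (deg e c - 1)%N.
  by rewrite /deg (cardsD1 b (nbhd e c)) inE esym ebc add1n subn1.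
rewrite -dA -dD -cardsX -(cardsID [set p : 'I_n * 'I_n | p.1 == p.2] (setX _ _)) addnC.
congr (_ + _)%N; last first.
  by apply: eq_card => -[x y]; rewrite !inE /= andbC.
rewrite -(card_imset _ (fun x y (h : (x, x) = (y, y)) => congr1 fst h)).
apply: eq_card => -[x y]; rewrite !inE /=.
apply/idP/idP.
  case/imsetP => z; rewrite !inE => /andP[h1 h2] [-> ->].
  rewrite h1 h2 eqxx !andbT /=; apply/andP; split; apply/eqP => h; subst z.
    by rewrite eirr in h2.
  by rewrite eirr in h1.
case/andP => /and3P[/andP[_ h1] _ h2] /eqP h; subst y.
by apply/imsetP; exists x => //; rewrite !inE h1 h2.
Qed.


Lemma mk_emb b c p : e b c -> p \in Pset b c -> mk b c p \in Emb.
Proof.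
move=> ebc; case: p => a d; rewrite !inE /= => /andP[/andP[/andP[ac ba] /andP[db cd]] ad].
have u : uniq [:: a; b; c; d].
  rewrite /= !inE !negb_or ac ad (eq_sym b d) db andbT /=.
  have ab : a != b by apply/eqP => h; subst a; rewrite eirr in ba.
  have bc : b != c by apply/eqP => h; subst c; rewrite eirr in ebc.
  have cd' : c != d by apply/eqP => h; subst d; rewrite eirr in cd.
  by rewrite ab bc cd'.
rewrite embE !mkV //= (esym a) ba ebc cd !andbT.
apply/injectiveP => i j; rewrite !ffunE /= => /eqP.
by rewrite nth_uniq // => /eqP /val_inj.
Qed.

Lemma fiberB b c : [set f in Emb | (V f 1, V f 2) == (b, c)] =
  if e b c then mk b c @: Pset b c else set0.
Proof.
apply/setP => f; rewrite !inE.
case: ifP => ebc; last first.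
  rewrite inE embE; apply/negP => /andP[/andP[_ /and3P[_ h _]] /eqP [h1 h2]].
  by rewrite h1 h2 ebc in h.
apply/idP/idP.
  case/andP; rewrite embE => /andP[/injectiveP fi /and3P[h1 h2 h3]] /eqP [e1 e2].
  apply/imsetP; exists (V f 0, V f 3).
    rewrite !inE /= -e1 -e2 esym h1 h3 /= !andbT.
    apply/andP; split; [apply/andP; split|]; apply/eqP => h; [have := Vinj (i:=0) (j:=2) fi isT isT h|have := Vinj (i:=3) (j:=1) fi isT isT h|have := Vinj (i:=0) (j:=3) fi isT isT h]; by [].
  apply: ffun4P => k Hk; rewrite mkV //.
  by case: k Hk => [|[|[|[|k]]]] //= _; rewrite ?e1 ?e2.
case/imsetP => p Hp ->; have := mk_emb ebc Hp; rewrite inE => ->; rewrite /= !mkV //.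
Qed.

Lemma card_Emb2 : #|Emb| =
  (\sum_(b : 'I_n) \sum_(c : 'I_n) (if e b c then #|Pset b c| else 0))%N.
Proof.
rewrite -sum1_card (partition_big (fun f => (V f 1, V f 2)) xpredT) //=.
rewrite pair_bigA; apply: eq_bigr => -[b c] _ /=.
rewrite sum1dep_card fiberB; case: ifP => ebc; last by rewrite cards0.
rewrite card_in_imset // => -[a d] [a' d'] _ _ /= h.
have := congr1 (fun f => (V f 0, V f 3)) h; rewrite /= !mkV //.
Qed.


Local Open Scope ring_scope.

Definition O (G : 'I_n -> 'I_n -> rat) := \sum_(b : 'I_n) \sum_(c | e b c) G b c.

Lemma E1 (G : 'I_n -> 'I_n -> rat) :
  \sum_(p in edges e) (G p.1 p.2 + G p.2 p.1) = O G.
Proof.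
rewrite big_split /=.
have h : forall H : 'I_n -> 'I_n -> rat, \sum_(p in edges e) H p.1 p.2 =
    \sum_(b : 'I_n) \sum_(c : 'I_n) (if (b < c)%N && e b c then H b c else 0).
  move=> H; rewrite pair_bigA /= big_mkcond; apply: eq_bigr => -[b c] _.
  by rewrite /edges inE.
rewrite h (h (fun x y => G y x)) [X in _ + X = _]exchange_big /=.
rewrite -big_split /O; apply: eq_bigr => b _ /=; rewrite [RHS]big_mkcond -big_split.
apply: eq_bigr => c _ /=; rewrite (esym c b).
case: (ltngtP b c) => h1.
- by case: (e b c); rewrite /= ?addr0.
- by case: (e b c); rewrite /= ?add0r.
- have -> : b = c by apply/val_inj.
  by rewrite eirr /= addr0.
Qed.

Lemma degE b : (deg e b)%:R = \sum_(c | e b c) (1 : rat).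
Proof. by rewrite /deg /nbhd -sum1dep_card natr_sum. Qed.

Lemma xiE b : (xi e b)%:R = \sum_(c | e b c) ((deg e c)%:R : rat).
Proof. by rewrite /xi natr_sum; apply: eq_bigl => c; rewrite inE. Qed.

Lemma Ob : O (fun b _ => (deg e b)%:R) = \sum_b ((deg e b)%:R) ^+ 2.
Proof.
apply: eq_bigr => b _; rewrite expr2 [X in _ = _ * X]degE mulr_sumr.
by apply: eq_bigr => c _; rewrite mulr1.
Qed.

Lemma Oswap G : O G = O (fun b c => G c b).
Proof.
rewrite /O; under eq_bigr do rewrite big_mkcond.
rewrite exchange_big; apply: eq_bigr => b _; rewrite [RHS]big_mkcond.
by apply: eq_bigr => c _; rewrite esym.
Qed.

Lemma Oc : O (fun _ c => (deg e c)%:R) = \sum_b ((deg e b)%:R) ^+ 2.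
Proof. by rewrite Oswap Ob. Qed.

Lemma Obc : O (fun b c => (deg e b)%:R * (deg e c)%:R) = O (fun b _ => (xi e b)%:R).
Proof.
apply: eq_bigr => b _; rewrite -mulr_sumr -xiE.
by rewrite -[in RHS](mulr1 (xi e b)%:R) -mulr_sumr -degE mulrC.
Qed.


Lemma O_add F G : O (fun b c => F b c + G b c) = O F + O G.
Proof. by rewrite /O -big_split; apply: eq_bigr => b _; rewrite -big_split. Qed.
Lemma O_sub F G : O (fun b c => F b c - G b c) = O F - O G.
Proof. by rewrite /O -sumrB; apply: eq_bigr => b _; rewrite -sumrB. Qed.

Lemma OP : O (fun b c => (#|Pset b c|)%:R) =
  O (fun b c => (deg e b)%:R * (deg e c)%:R) - O (fun b _ => (deg e b)%:R)
  - O (fun _ c => (deg e c)%:R) + O (fun _ _ => 1) - O (fun b c => (#|common e b c|)%:R).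
Proof.
rewrite -!O_sub -O_add -O_sub; apply: eq_bigr => b _; apply: eq_bigr => c ebc.
have := Pset_card ebc => /(congr1 (fun x : nat => x%:R : rat)).
have d1 : (1 <= deg e b)%N by rewrite /deg (cardsD1 c) inE ebc.
have d2 : (1 <= deg e c)%N by rewrite /deg (cardsD1 b) inE esym ebc.
rewrite natrD natrM !natrB // => h.
have -> : (#|Pset b c|)%:R = ((deg e b)%:R - 1%:R) * ((deg e c)%:R - 1%:R) - (#|common e b c|)%:R :> rat.
  by rewrite -h addrK.
ring.
Qed.

Lemma A2 : 2 * ((nL4 e)%:R : rat) = O (fun b c => (#|Pset b c|)%:R).
Proof.
have h := card_Emb2; rewrite card_Emb in h.
rewrite -natrM h natr_sum; apply: eq_bigr => b _; rewrite natr_sum [RHS]big_mkcond.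
by apply: eq_bigr => c _; case: (e b c).
Qed.

End S.

Local Open Scope ring_scope.
Theorem proposition12 (n : nat) (e : rel 'I_n) :
  simple_graph e ->
  ((nL4 e)%:R : rat) =
    (nedges e)%:R - n%:R * avg_k2 e + mu1 e - mu2 e.
Proof.
case=> esym eirr.
have hk : n%:R * avg_k2 e = \sum_(x : 'I_n) ((deg e x)%:R) ^+ 2.
  rewrite /avg_k2 mulrA; case: (posnP n) => n0.
    by subst n; rewrite !big_ord0 mulr0.
  by rewrite mulfV ?mul1r // pnatr_eq0 -lt0n n0.
have hm : 2 * (nedges e)%:R = O e (fun _ _ => 1).
  rewrite -(E1 esym eirr) sumr_const /nedges -mulr_natl.
  by rewrite mulr1 mulr_natr.
have hmu1 : 2 * mu1 e = O e (fun b _ => (xi e b)%:R).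
  by rewrite -(E1 esym eirr) /mu1 mulrA mulfV ?mul1r.
have hmu2 : 2 * mu2 e = O e (fun b c => (#|common e b c|)%:R).
  rewrite -(E1 esym eirr) /mu2 mulr_sumr; apply: eq_bigr => p _.
  by rewrite /common setIC; ring.
have h1 := A2 esym eirr. have h2 := OP esym eirr.
have h3 := Obc e. have h4 := Ob e. have h5 := Oc esym.
lra.
Qed.
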